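(* Let $t\in\mathbb Z$ and $k\ge0$, and let $W_t(|t|+2k)$ be the cell module of ${\mathbb{TLB}}_{|t|+2k}(q,Q)$ indexed by $t$. Then $$\dim W_t(|t|+2k)=\binom{|t|+2k}{k}.$$
   Context: Temperley–Lieb diagrams $t\to s$ have $t$ bottom and $s$ top points of a rectangle joined in pairs by non-crossing arcs; the leftmost region is the region adjacent to the left edge; marked diagrams may carry at most one mark (dot) on each arc bounding the leftmost region. ${\mathbb{TLB}}_n(q,Q)$ is the algebra with basis the marked diagrams $n\to n$ (no loops), multiplied by concatenation with the rules: unmarked loop $\mapsto -(q+q^{-1})$, loop with one mark $\mapsto \frac qQ+\frac Qq$, an arc with two marks equals $-(Q+Q^{-1})$ times the arc with one mark. For $t\in\Lambda_B(n)=\{t: |t|\le n,\ t\equiv n\pmod 2\}$, the cell module $W_t(n)$ (for the cellular basis $C^t_{S,T}$ given by $D_2^*D_1$ for $t\ge0$ and $D_2^*(C_0\otimes I^{\otimes(|t|-1)})D_1$ for $t<0$) is the free module with basis the set $M(t)$ of monic diagrams $|t|\to n$ (i.e. with $|t|$ through strings) in which no through string is marked, with the induced action of ${\mathbb{TLB}}_n(q,Q)$. Here $C_0$ is a marked vertical strand, $I$ an unmarked one, $D^*$ the horizontal reflection of $D$. *)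

(* Defs.v *)
From HB Require Import structures.
From mathcomp Require Import all_boot all_order all_fingroup all_algebra.
Set Implicit Arguments. Unset Strict Implicit. Unset Printing Implicit Defensive.
Import GRing.Theory.

(* Monic marked TL diagrams  a -> n  (a = |t| through strings) in which no
   through string is marked, encoded by their top boundary:
   - p : involution of the n top points; p i = i  iff  i is the top end of a
     through string, otherwise {i, p i} is a cap (arc joining two top points);
     the a bottom points are joined, in order, to the a fixed points of p, so
     the diagram is determined by p;
   - noncrossing: if i < l < p i then l lies on a cap nested inside {i, p i}
     (so caps do not cross and no through string passes under a cap);
   - m : set of left endpoints of the marked caps.  A cap {i, p i} (i < p i)
     bounds the leftmost region iff it is not nested in another cap and lies
     to the left of every through string; only such caps may carry a mark,
     and at most one each (a set of caps). *)
Definition monic_marked (a n : nat) (x : {perm 'I_n} * {set 'I_n}) : bool :=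
  let p := x.1 in let m := x.2 in
  [&& [forall i : 'I_n, p (p i) == i],
      #|[set i | p i == i]| == a,
      [forall i : 'I_n, forall l : 'I_n, ((i < l)%N && (l < p i)%N) ==>
                            [&& p l != l, (i < p l)%N & (p l < p i)%N]]
    & [forall i in m,
        [&& (i < p i)%N,
            [forall j : 'I_n, ~~ ((j < i)%N && (i < p j)%N)]
          & [forall l : 'I_n, (p l == l) ==> (i < l)%N]]]].

Arguments monic_marked a n x : clear implicits.

Definition Mt (t : int) (n : nat) : finType :=
  {x : {perm 'I_n} * {set 'I_n} | monic_marked (absz t) n x}.

(* The cell module W_t(n) as a K-vector space: free with basis M(t)
   (the TLB_n(q,Q)-action does not affect the dimension). *)
Definition cellW (K : fieldType) (t : int) (n : nat) : vectType K :=
  {ffun Mt t n -> K^o}.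

(* Main.v *)
Require Import Defs.
From HB Require Import structures.
From mathcomp Require Import all_boot all_order all_fingroup all_algebra.
From mathcomp Require Import zify.
Set Implicit Arguments. Unset Strict Implicit. Unset Printing Implicit Defensive.

Definition nfix n (f : nat -> nat) := \sum_(i < n) (f i == i : nat).

Lemma nfix_S n f : nfix n.+1 f = nfix n f + (f n == n).
Proof. by rewrite /nfix big_ord_recr. Qed.

Lemma nfix_ext n f g : (forall i, i < n -> f i = g i) -> nfix n f = nfix n g.
Proof. by move=> H; apply: eq_bigr => i _; rewrite H. Qed.

Lemma nfix_le n f : nfix n f <= n.
Proof. elim: n => [|n IH]; first by rewrite /nfix big_ord0. rewrite nfix_S; case: eqP => _ /=; lia. Qed.

Lemma nfix0 n f : nfix n f = 0 -> forall i, i < n -> f i <> i.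
Proof.
elim: n => [|n IH] //; rewrite nfix_S => H i Hi.
have [Hn|Hn] : i < n \/ i = n by lia.
  by apply: IH => //; lia.
by subst; move: H; case: eqP => //; lia.
Qed.

Lemma nfix_pos n f : 0 < nfix n f -> exists i, i < n /\ f i = i.
Proof.
elim: n => [|n IH]; first by rewrite /nfix big_ord0.
rewrite nfix_S; case: (eqP (x := f n)) => [E|_] H; first by exists n.
have [i [Hi Hf]] : exists i, i < n /\ f i = i by apply: IH; lia.
by exists i; split => //; lia.
Qed.

Lemma nfix_one n f g j : j < n -> (forall i, i < n -> i <> j -> f i = g i) ->
  f j = j -> g j <> j -> nfix n f = (nfix n g).+1.
Proof.
elim: n => [|n IH] //= Hj H Hf Hg.
rewrite !nfix_S.
have [Hjn|Hjn] : j < n \/ j = n by lia.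
  rewrite (IH Hjn) //; last by move=> i Hi Hij; apply: H => //; lia.
  by rewrite H //; lia.
subst j; rewrite (nfix_ext (g := g)); last by move=> i Hi; apply: H; lia.
rewrite Hf eqxx; case: eqP => //; lia.
Qed.

Fixpoint lastfix (f : nat -> nat) n := match n with 0 => 0 | n'.+1 => if f n' == n' then n' else lastfix f n' end.

Lemma lastfix_spec f n : (exists l, l < n /\ f l = l) ->
  [/\ lastfix f n < n, f (lastfix f n) = lastfix f n & forall l, lastfix f n < l < n -> f l <> l].
Proof.
elim: n => [|n IH] [l [Hl Hfl]] //=.
case: eqP => [E|NE].
  split => //; lia.
have [Hln|Hln] : l < n \/ l = n by lia.
  have [] := IH (ex_intro _ l (conj Hln Hfl)) => H1 H2 H3; split => //; first lia.
  move=> l' Hl'; have [Hl'n|Hl'n] : l' < n \/ l' = n by lia.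
    by apply: H3; lia.
  by subst.
by subst.
Qed.

Lemma lastfix_uniq f n j : j < n -> f j = j -> (forall l, j < l < n -> f l <> l) -> lastfix f n = j.
Proof.
elim: n => [|n IH] //= Hj Hf H.
have [Hjn|Hjn] : j < n \/ j = n by lia.
  case: eqP => [E|_]; first by exfalso; apply: (H n) => //; lia.
  by apply: IH => // l Hl; apply: H; lia.
by subst; rewrite Hf eqxx.
Qed.

Lemma nfix_none n f : (forall i, i < n -> f i <> i) -> nfix n f = 0.
Proof.
elim: n => [|n IH] H; first by rewrite /nfix big_ord0.
rewrite nfix_S IH; last by move=> i Hi; apply: H; lia.
by case: eqP => // /H; lia.
Qed.

Lemma lastfix_ext f g n : (forall i, i < n -> f i = g i) -> lastfix f n = lastfix g n.
Proof.
elim: n => [|n IH] //= H; rewrite H // IH // => i Hi; apply: H; lia.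
Qed.

Definition invo n (f : nat -> nat) := forall i, i < n -> f i < n /\ f (f i) = i.
Definition nc n (f : nat -> nat) := forall i l, i < n -> l < n -> i < l -> l < f i ->
   [/\ f l <> l, i < f l & f l < f i].
Definition mks n (f : nat -> nat) (mk : nat -> bool) := forall i, mk i ->
   [/\ i < n, i < f i, (forall j, j < n -> j < i -> i < f j -> False)
     & (forall l, l < n -> f l = l -> i < l)].
Definition MM a n f mk := [/\ invo n f, nfix n f = a, nc n f & mks n f mk].

Lemma MM_ext a n f g mk mk' : (forall i, i < n -> f i = g i) -> (forall i, mk i = mk' i) ->
  MM a n f mk -> MM a n g mk'.
Proof.
move=> E Em [Hi Hn Hc Hm]; split.
- move=> i Hi'; have [A B] := Hi i Hi'; rewrite -(E i) // -(E (f i)) //.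
- by rewrite -(nfix_ext E).
- move=> i l Hi' Hl; rewrite -!E // => H1 H2; exact: Hc.
- move=> i; rewrite -Em => /Hm [H1 H2 H3 H4]; split => //; first by rewrite -E.
    by move=> j Hj; rewrite -E //; apply: H3.
  by move=> l Hl; rewrite -E //; apply: H4.
Qed.

Lemma invo_inj n f i j : invo n f -> i < n -> j < n -> f i = f j -> i = j.
Proof. move=> H Hi Hj E; have [_ <-] := H i Hi; have [_ <-] := H j Hj; by rewrite E. Qed.

Definition ext1 n (f : nat -> nat) i := if i == n then n else f i.
Definition ext2 n (f : nat -> nat) j i := if i == n then j else if i == j then n else f i.
Definition resf n (f : nat -> nat) i := if f i == n then i else f i.

Lemma MM_ext1 a n f mk : MM a n f mk -> MM a.+1 n.+1 (ext1 n f) mk.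
Proof.
rewrite /ext1 => [[Hi Hn Hc Hm]]; split.
- move=> i Hi'; case: eqP => [->|ne]; first by rewrite eqxx.
  have [H1 H2] := Hi i (ltac:(lia)); have -> : (f i == n) = false by apply/eqP; lia.
  split; [lia|done].
- rewrite nfix_S eqxx /= eqxx (nfix_ext (g := f)) ?Hn ?addn1 // => i Hi'; case: eqP => //; lia.
- move=> i l Hi' Hl; case: eqP => [->|ne]; first lia.
  case: eqP => [->|ne'] H1 H2. have := Hi i; lia.
  have [] := Hc i l _ _ H1 H2; try lia.
  by move=> A B C; split.
- move=> i /Hm [H1 H2 H3 H4]; have -> : (i == n) = false by apply/eqP; lia.
  split => //; first lia.
    move=> j Hj; case: eqP => [->|ne]; first lia. apply: H3; lia.
  move=> l Hl; case: eqP => [->|ne]; first lia. apply: H4; lia.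
Qed.

Lemma MM_nomark a n g mk : MM a n.+1 g mk -> ~~ mk n.
Proof.
move=> [Hi _ _ Hm]; apply/negP => /Hm [_ H _ _]; have := Hi n; lia.
Qed.

Lemma MM_res a n g mk : MM a n.+1 g mk ->
  [/\ invo n (resf n g), nc n (resf n g) & mks n (resf n g) (fun i => mk i && (g i != n))].
Proof.
rewrite /resf => [[Hi Hn Hc Hm]]; split.
- move=> i Hin; case: eqP => [E|NE]; first by rewrite E eqxx.
  have [H1 H2] := Hi i (ltac:(lia)); rewrite H2; have -> : (i == n) = false by apply/eqP; lia.
  split => //; lia.
- move=> i l Hin Hln; case: eqP => [E|NE]; first lia.
  move=> H1 H2; have [A B C] := Hc i l (ltac:(lia)) (ltac:(lia)) H1 H2.
  have [D _] := Hi i (ltac:(lia)).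
  case: eqP => [E|_]; first lia. by split.
- move=> i /andP [/Hm [H1 H2 H3 H4] /eqP H5].
  have Hin : i < n by have := Hi i; lia.
  have -> : (g i == n) = false by apply/eqP.
  split => //.
    move=> j Hj; case: eqP => [E|NE]; first lia.
    apply: H3; lia.
  move=> l Hl; case: eqP => [E|NE] Hf.
    have : ~ (l < i) by move=> Hli; apply: (H3 l) => //; lia.
    have : i <> l by move=> Eil; subst; auto.
    lia.
  by apply: H4 => //; lia.
Qed.

Lemma MM_resA a n g mk : MM a n.+1 g mk -> g n = n ->
  exists a', a = a'.+1 /\ MM a' n (resf n g) (fun i => mk i && (g i != n)).
Proof.
move=> H E; have [H1 H2 H3] := MM_res H; case: H => [Hi Hn Hc Hm].
exists (nfix n g); split.
  by rewrite -Hn nfix_S E eqxx addn1.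
split => //; apply: nfix_ext => i Hi'; rewrite /resf; case: eqP => // E'.
have := invo_inj Hi (ltac:(lia) : i < n.+1) (ltac:(lia) : n < n.+1); rewrite E' E; lia.
Qed.

Lemma MM_resB a n g mk : MM a n.+1 g mk -> g n <> n ->
  [/\ MM a.+1 n (resf n g) (fun i => mk i && (g i != n)),
      lastfix (resf n g) n = g n & (mk (g n) -> a = 0)].
Proof.
move=> H E; have [H1 H2 H3] := MM_res H; case: H => [Hi Hn Hc Hm].
have [Hgn Hggn] := Hi n (ltac:(lia)).
have Hj : g n < n by lia.
have Hres : resf n g (g n) = g n by rewrite /resf Hggn eqxx.
split.
- split => //; rewrite -Hn nfix_S; have -> : (g n == n) = false by apply/eqP.
  rewrite addn0; apply: (nfix_one Hj) => //; last by rewrite Hggn; lia.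
  move=> i Hi' Hij; rewrite /resf; case: eqP => // E'.
  exfalso; apply: Hij; apply: (invo_inj Hi) => //; lia.
- apply: lastfix_uniq => // l Hl; rewrite /resf; case: eqP => [E'|NE].
    have := invo_inj Hi (ltac:(lia) : l < n.+1) (ltac:(lia) : g n < n.+1); rewrite E' Hggn; lia.
  by have [] := Hc (g n) l (ltac:(lia)) (ltac:(lia)) (ltac:(lia)) (ltac:(lia)).
- move=> /Hm [_ _ _ H4]; rewrite -Hn; apply: nfix_none => l Hl Hfl.
  have := H4 l Hl Hfl => Hlt.
  have [Hln|Hln] : l < n \/ l = n by lia.
    by have [] := Hc (g n) l (ltac:(lia)) (ltac:(lia)) (ltac:(lia)) (ltac:(lia)).
  by subst; auto.
Qed.

Lemma MM_ext2 a n f mk (b : bool) : MM a.+1 n f mk -> (b -> a = 0) ->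
  let j := lastfix f n in
  [/\ MM a n.+1 (ext2 n f j) (fun i => mk i || b && (i == j)), j < n, f j = j & ~~ mk j].
Proof.
move=> [Hi Hn Hc Hm] Hb j.
have [Hj Hfj Hlast] : [/\ j < n, f j = j & forall l, j < l < n -> f l <> l].
  apply: lastfix_spec; apply: nfix_pos; lia.
have Hnm : ~~ mk j by apply/negP => /Hm [_ H _ _]; lia.
have Hinv : invo n.+1 (ext2 n f j).
  rewrite /ext2 => i Hi'; case: eqP => [->|ne].
    have -> : (j == n) = false by apply/eqP; lia.
    rewrite eqxx; split => //; lia.
  case: eqP => [->|ne']; first by rewrite eqxx; split => //; lia.
  have [A B] := Hi i (ltac:(lia)).
  have -> : (f i == n) = false by apply/eqP; lia.
  have -> : (f i == j) = false.
    by apply/eqP => E; apply: ne'; apply: (invo_inj Hi) => //; [lia | rewrite Hfj].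
  by split => //; lia.
have Hfix : nfix n.+1 (ext2 n f j) = a.
  rewrite nfix_S /ext2 eqxx; have -> : (j == n) = false by apply/eqP; lia.
  rewrite addn0; apply/eqP; rewrite -eqSS -Hn; apply/eqP; symmetry.
  apply: (nfix_one Hj) => //.
    move=> i Hi' Hij; have -> : (i == n) = false by apply/eqP; lia.
    by have -> : (i == j) = false by apply/eqP.
  have -> : (j == n) = false by apply/eqP; lia.
  rewrite eqxx; lia.
split => //; split => //.
- rewrite /ext2 => i l Hi' Hl; case: eqP => [->|ne]; first lia.
  case: eqP => [->|ne'] H1 H2.
    have -> : (l == n) = false by apply/eqP; lia.
    have -> : (l == j) = false by apply/eqP; lia.
    have [A B] := Hi l (ltac:(lia)).
    have Hfl : f l <> l by apply: Hlast; lia.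
    have Hflj : f l <> j.
      by move=> E; have := invo_inj Hi (ltac:(lia) : l < n) Hj; rewrite E Hfj; lia.
    have Hjfl : j < f l.
      case: (ltnP j (f l)) => // Hle.
      have [] := Hc (f l) j (ltac:(lia)) Hj (ltac:(lia)); [by rewrite B | done].
    by split.
  have [A B] := Hi i (ltac:(lia)).
  have -> : (l == n) = false by apply/eqP; lia.
  have Hlj : l <> j.
    by move=> E; subst l; have [] := Hc i j (ltac:(lia)) Hj H1 H2.
  have -> : (l == j) = false by apply/eqP.
  by apply: Hc => //; lia.
- move=> i /orP [/Hm [H1 H2 H3 H4]|/andP [Hb' /eqP Hij]].
    have Hij : i < j by apply: H4.
    rewrite /ext2; have -> : (i == n) = false by apply/eqP; lia.
    have -> : (i == j) = false by apply/eqP; lia.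
    split => //; first lia.
      move=> jj Hjj; case: eqP => [->|ne]; first lia.
      case: eqP => [->|ne']; first lia.
      by apply: H3; lia.
    move=> l Hl; case: eqP => [->|ne]; first lia.
    case: eqP => [E|ne'] Hfl; first by rewrite E.
    by apply: H4 => //; lia.
  subst i; have Ha := Hb Hb'; rewrite Ha in Hfix.
  rewrite /ext2; have -> : (j == n) = false by apply/eqP; lia.
  rewrite eqxx; split => //; try lia.
    move=> jj Hjj; case: eqP => [->|ne]; first lia.
    case: eqP => [->|ne']; first lia.
    move=> H1 H2; by have [] := Hc jj j (ltac:(lia)) Hj H1 H2.
  move=> l Hl Hfl; exfalso; apply: (nfix0 Hfix Hl); by rewrite /ext2.
Qed.

Lemma res_ext1 n f i : invo n f -> i < n -> resf n (ext1 n f) i = f i.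
Proof.
move=> H Hi; rewrite /resf /ext1; have -> : (i == n) = false by apply/eqP; lia.
have [A _] := H i Hi; by have -> : (f i == n) = false by apply/eqP; lia.
Qed.

Lemma ext1_res n g i : invo n.+1 g -> g n = n -> i < n.+1 -> ext1 n (resf n g) i = g i.
Proof.
move=> H E Hi; rewrite /resf /ext1; case: eqP => [->|ne]; first by rewrite E.
case: eqP => // E'; exfalso; apply: ne.
apply: (invo_inj H) => //; lia.
Qed.

Lemma res_ext2 n f j i : invo n f -> j < n -> f j = j -> i < n -> resf n (ext2 n f j) i = f i.
Proof.
move=> H Hj Hfj Hi; rewrite /resf /ext2.
case: (i =P n) => [E|_]; first lia.
case: (i =P j) => [->|ne]; first by rewrite eqxx.
have [A _] := H i Hi; by case: (f i =P n) => //; lia.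
Qed.

Lemma ext2_res n g i : invo n.+1 g -> g n <> n -> i < n.+1 -> ext2 n (resf n g) (g n) i = g i.
Proof.
move=> H E Hi; have [A B] := H n (ltac:(lia)).
rewrite /resf /ext2; case: (i =P n) => [->|ne] //.
case: (i =P g n) => [->|ne']; first by rewrite B; case: (n =P n).
case: (g i =P n) => // E'; exfalso; apply: ne'; apply: (invo_inj H) => //; lia.
Qed.

Definition fnat n (p : {perm 'I_n}) (i : nat) : nat :=
  oapp (fun j : 'I_n => val (p j)) i (insub i).
Definition mnat n (m : {set 'I_n}) (i : nat) : bool :=
  oapp (fun j : 'I_n => j \in m) false (insub i).

Lemma fnat_ord n (p : {perm 'I_n}) (j : 'I_n) : fnat p j = p j.
Proof. by rewrite /fnat valK. Qed.
Lemma mnat_ord n (m : {set 'I_n}) (j : 'I_n) : mnat m j = (j \in m).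
Proof. by rewrite /mnat valK. Qed.
Lemma mnat_out n (m : {set 'I_n}) i : mnat m i -> i < n.
Proof. by rewrite /mnat; case: insubP. Qed.
Lemma fnat_lt n (p : {perm 'I_n}) i : i < n -> fnat p i < n.
Proof. by move=> H; rewrite -[i]/(val (Ordinal H)) fnat_ord. Qed.

Definition mkperm n (g : nat -> nat) : {perm 'I_n} :=
  match injectiveP (fun i : 'I_n => insubd i (g i)) with
  | ReflectT h => perm h | ReflectF _ => 1%g end.
Definition mkset n (mk : nat -> bool) : {set 'I_n} := [set i : 'I_n | mk i].

Lemma fnat_mkperm n g : invo n g -> forall i, i < n -> fnat (mkperm n g) i = g i.
Proof.
move=> H.
have inj : injective (fun i : 'I_n => insubd i (g i)).
  move=> x y /(congr1 val); rewrite !val_insubd.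
  have [A _] := H x (ltn_ord x); have [B _] := H y (ltn_ord y).
  rewrite A B => E; apply: val_inj; exact: (invo_inj H (ltn_ord x) (ltn_ord y) E).
rewrite /mkperm; case: injectiveP => [h|/(_ inj)//] i Hi.
by rewrite -[i]/(val (Ordinal Hi)) fnat_ord permE /= val_insubd; have [-> _] := H i Hi.
Qed.

Lemma mnat_mkset n mk i : mnat (mkset n mk) i = (i < n) && mk i.
Proof. rewrite /mnat /mkset; case: insubP => [j Hj <-|/negbTE ->] //; by rewrite /= inE ltn_ord. Qed.

Definition T n := ({perm 'I_n} * {set 'I_n})%type.

Lemma T_eq n (x y : T n) : (forall i, i < n -> fnat x.1 i = fnat y.1 i) ->
  (forall i, mnat x.2 i = mnat y.2 i) -> x = y.
Proof.
case: x y => p m [p' m'] /= H1 H2; congr pair.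
  by apply/permP => j; apply: val_inj; have := H1 j (ltn_ord j); rewrite !fnat_ord.
by apply/setP => j; have := H2 j; rewrite !mnat_ord.
Qed.

Lemma card_setT' (I : finType) (P : pred I) : #|[set i | P i]| = \sum_(i : I) (P i : nat).
Proof.
rewrite -sum1_card big_mkcond /=; apply: eq_bigr => i _; by rewrite inE; case: (P i).
Qed.

Lemma charMM a n (x : T n) : monic_marked a n x <-> MM a n (fnat x.1) (mnat x.2).
Proof.
case: x => p m /=; rewrite /monic_marked /=.
have E : #|[set i | p i == i]| = nfix n (fnat p).
  rewrite card_setT' /nfix; apply: eq_bigr => i _; by rewrite fnat_ord (inj_eq val_inj).
rewrite E; split.
- case/and4P => /forallP H1 /eqP H2 /forallP H3 /forallP H4.
  have Hinv : invo n (fnat p).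
    move=> i Hi; rewrite -[i]/(val (Ordinal Hi)) fnat_ord fnat_ord; split => //.
    by have /eqP -> := H1 (Ordinal Hi).
  split => //.
  + move=> i l Hi Hl; rewrite -[i]/(val (Ordinal Hi)) -[l]/(val (Ordinal Hl)) !fnat_ord => A B.
    have /forallP/(_ (Ordinal Hl)) := H3 (Ordinal Hi); rewrite A B /= => /and3P [C D F].
    split => // E'; move/eqP: C; apply; exact: val_inj.
  + move=> i Hm; have Hi := mnat_out Hm; move: Hm.
    rewrite -[i]/(val (Ordinal Hi)) mnat_ord => Hm.
    have /implyP/(_ Hm)/and3P [A /forallP B /forallP C] := H4 (Ordinal Hi).
    rewrite fnat_ord; split => //.
      move=> j Hj; rewrite -[j]/(val (Ordinal Hj)) fnat_ord => D F.
      by have := B (Ordinal Hj); rewrite D F.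
    move=> l Hl; rewrite -[l]/(val (Ordinal Hl)) fnat_ord => D.
    have /implyP := C (Ordinal Hl); apply; apply/eqP; exact: val_inj.
- case=> Hinv Hfix Hc Hm; apply/and4P; split; last first.
  + apply/forallP => i; apply/implyP => Hi.
    have [A B C D] := Hm i (ltac:(by rewrite mnat_ord)).
    rewrite fnat_ord in B; apply/and3P; split => //.
      apply/forallP => j; apply/negP => /andP [F G].
      by apply: (C j (ltn_ord j)); rewrite ?fnat_ord.
    apply/forallP => l; apply/implyP => /eqP F; apply: D => //; by rewrite fnat_ord F.
  + apply/forallP => i; apply/forallP => l; apply/implyP => /andP [A B].
    have := Hc i l (ltn_ord i) (ltn_ord l) A; rewrite !fnat_ord => /(_ B) [C D F].
    apply/and3P; split => //; apply/eqP => G; apply: C; by rewrite G.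
  + by rewrite Hfix.
  + apply/forallP => i; apply/eqP; apply: val_inj.
    have [_ B] := Hinv i (ltn_ord i); by rewrite !fnat_ord in B.
Qed.

Definition E1 n (x : T n) : T n.+1 := (mkperm n.+1 (ext1 n (fnat x.1)), mkset n.+1 (mnat x.2)).
Definition E2 n (b : bool) (x : T n) : T n.+1 :=
  (mkperm n.+1 (ext2 n (fnat x.1) (lastfix (fnat x.1) n)),
   mkset n.+1 (fun i => mnat x.2 i || b && (i == lastfix (fnat x.1) n))).
Definition R n (x : T n.+1) : T n :=
  (mkperm n (resf n (fnat x.1)), mkset n (fun i => mnat x.2 i && (fnat x.1 i != n))).

Lemma MM_supp a n f mk i : MM a n f mk -> mk i -> i < n.
Proof. by case=> _ _ _ H /H []. Qed.

Lemma E1_MM a n (x : T n) : MM a n (fnat x.1) (mnat x.2) ->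
  [/\ MM a.+1 n.+1 (fnat (E1 x).1) (mnat (E1 x).2),
      forall i, i < n.+1 -> fnat (E1 x).1 i = ext1 n (fnat x.1) i
    & forall i, mnat (E1 x).2 i = mnat x.2 i].
Proof.
move=> H; have H1 := MM_ext1 H; have [Hi _ _ _] := H1.
have F : forall i, i < n.+1 -> fnat (E1 x).1 i = ext1 n (fnat x.1) i by apply: fnat_mkperm.
have M : forall i, mnat (E1 x).2 i = mnat x.2 i.
  move=> i; rewrite mnat_mkset; case: (boolP (mnat x.2 i)) => [Hm|]; last by rewrite andbF.
  by rewrite andbT; have := mnat_out Hm; lia.
split => //; apply: MM_ext H1 => // i Hi'; by rewrite F.
Qed.

Lemma E2_MM a n (b : bool) (x : T n) : MM a.+1 n (fnat x.1) (mnat x.2) -> (b -> a = 0) ->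
  let j := lastfix (fnat x.1) n in
  [/\ MM a n.+1 (fnat (E2 b x).1) (mnat (E2 b x).2),
      forall i, i < n.+1 -> fnat (E2 b x).1 i = ext2 n (fnat x.1) j i,
      forall i, mnat (E2 b x).2 i = mnat x.2 i || b && (i == j),
      j < n & fnat x.1 j = j /\ ~~ mnat x.2 j].
Proof.
move=> H Hb j; have [H1 Hj Hfj Hnm] := MM_ext2 H Hb; have [Hi _ _ _] := H1.
have F : forall i, i < n.+1 -> fnat (E2 b x).1 i = ext2 n (fnat x.1) j i by apply: fnat_mkperm.
have M : forall i, mnat (E2 b x).2 i = mnat x.2 i || b && (i == j).
  move=> i; rewrite mnat_mkset; case: (boolP (mnat x.2 i)) => [Hm|] /=.
    by rewrite andbT; have := mnat_out Hm; lia.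
  case: b Hb {H1 F} => /= _; rewrite /j; case: (i =P lastfix (fnat x.1) n) => [->|_] _;
   rewrite ?eqxx ?andbF //; apply/andP; split => //; lia.
split => //; apply: MM_ext H1 => // i Hi'; by rewrite F.
Qed.

Lemma R_MM a n (y : T n.+1) : MM a n.+1 (fnat y.1) (mnat y.2) ->
  [/\ forall i, i < n -> fnat (R y).1 i = resf n (fnat y.1) i
    & forall i, mnat (R y).2 i = mnat y.2 i && (fnat y.1 i != n)].
Proof.
move=> H; have [Hi _ _] := MM_res H; split; first by apply: fnat_mkperm.
move=> i; rewrite mnat_mkset; case: (boolP (mnat y.2 i)) => [Hm|] /=; last by rewrite andbF.
have := MM_supp H Hm; have := MM_nomark H.
have [E|ne] := eqVneq i n; first by subst i; move=> /negP.
move=> _ Hs; have -> // : i < n by move/eqP: ne; lia.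
Qed.

Definition S a n := [set x : T n | monic_marked a n x].

Lemma inS a n x : x \in S a n <-> MM a n (fnat x.1) (mnat x.2).
Proof. by rewrite inE; apply: charMM. Qed.

Lemma card_bij (T1 T2 : finType) (A : {set T1}) (B : {set T2}) (f : T1 -> T2) (g : T2 -> T1) :
  (forall x, x \in A -> f x \in B) -> (forall y, y \in B -> g y \in A) ->
  (forall x, x \in A -> g (f x) = x) -> (forall y, y \in B -> f (g y) = y) -> #|A| = #|B|.
Proof.
move=> H1 H2 H3 H4; rewrite -(card_in_imset (f := f) (D := A)); last first.
  by move=> x y Hx Hy E; rewrite -(H3 x Hx) -(H3 y Hy) E.
apply: eq_card => y; apply/imsetP/idP => [[x Hx ->]|Hy]; first exact: H1.
by exists (g y); [apply: H2 | rewrite H4].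
Qed.

Lemma resf_ext n h h' i : h i = h' i -> resf n h i = resf n h' i.
Proof. by rewrite /resf => ->. Qed.
Lemma ext1_ext n h h' i : (forall i, i < n -> h i = h' i) -> i < n.+1 -> ext1 n h i = ext1 n h' i.
Proof. move=> H Hi; rewrite /ext1; case: eqP => // ne; apply: H; lia. Qed.
Lemma ext2_ext n h h' j i : (forall i, i < n -> h i = h' i) -> i < n.+1 -> ext2 n h j i = ext2 n h' j i.
Proof. move=> H Hi; rewrite /ext2; case: eqP => // ne; case: eqP => // _; apply: H; lia. Qed.

Definition A n := [set x : T n.+1 | fnat x.1 n == n].

Lemma cardA a n : #|S a.+1 n.+1 :&: A n| = #|S a n|.
Proof.
symmetry; apply: (card_bij (f := @E1 n) (g := @R n)).
- move=> x /inS H; have [H1 F M] := E1_MM H.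
  by rewrite inE; apply/andP; split; [apply/inS | rewrite inE F // /ext1 eqxx].
- move=> y; rewrite inE => /andP [/inS H]; rewrite inE => /eqP E.
  have [a' [Ea H']] := MM_resA H E; case: Ea => <- in H'.
  have [F M] := R_MM H; apply/inS; apply: MM_ext H' => // i Hi; by rewrite F.
- move=> x /inS H; have [H1 F M] := E1_MM H; have [F' M'] := R_MM H1.
  have [Hi _ _ _] := H.
  apply: T_eq => [i Hi'|i].
    by rewrite F' // (@resf_ext n _ (ext1 n (fnat x.1)) i) ?F //; [apply: res_ext1 | lia].
  rewrite M' M; case: (boolP (mnat x.2 i)) => //= Hm; have := mnat_out Hm => Hin.
  rewrite F; last lia. rewrite /ext1; case: (i =P n) => [E|_]; first lia.
  have [B _] := Hi i Hin; by rewrite neq_ltn B.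
- move=> y; rewrite inE => /andP [/inS H]; rewrite inE => /eqP E.
  have [a' [Ea H']] := MM_resA H E; have [F M] := R_MM H.
  have H2 : MM a' n (fnat (R y).1) (mnat (R y).2) by apply: MM_ext H' => // i Hi; rewrite F.
  have [_ F' M'] := E1_MM H2; have [Hi _ _ _] := H.
  apply: T_eq => [i Hi'|i].
    by rewrite F' // (@ext1_ext n _ (resf n (fnat y.1)) i) // ext1_res.
  rewrite M' M; case: (boolP (mnat y.2 i)) => //= Hm; have := MM_supp H Hm => Hin.
  have := MM_nomark H; have [E0|ne] := eqVneq i n; first by subst i; move=> /negP.
  move=> _; apply/eqP => E'; move/eqP: ne; apply.
  apply: (invo_inj Hi) => //; by rewrite E' E.
Qed.

Lemma cardA0 n : #|S 0 n.+1 :&: A n| = 0.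
Proof.
apply/eqP; rewrite cards_eq0; apply/eqP/setP => y; rewrite !inE.
apply/negP => /andP [/charMM H /eqP E]; by have [a' [Ea _]] := MM_resA H E.
Qed.

Definition PB a n (b : bool) := [set x : T n.+1 | [&& x \in S a n.+1, fnat x.1 n != n & mnat x.2 (fnat x.1 n) == b]].

Lemma cardPB a n (b : bool) : (b -> a = 0) -> #|PB a n b| = #|S a.+1 n|.
Proof.
move=> Hb; symmetry; apply: (card_bij (f := @E2 n b) (g := @R n)).
- move=> x /inS H; have [H1 F M Hj [Hfj Hnm]] := E2_MM H Hb.
  rewrite inE; apply/and3P; split; first by apply/inS.
    rewrite F // /ext2 eqxx; apply/eqP; lia.
  rewrite F // /ext2 eqxx M eqxx andbT; by case: (mnat x.2 _) Hnm.
- move=> y; rewrite inE => /and3P [/inS H /eqP E /eqP Eb].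
  have [H' _ _] := MM_resB H E.
  have [F M] := R_MM H; apply/inS; apply: MM_ext H' => // i Hi; by rewrite F.
- move=> x /inS H; have [H1 F M Hj [Hfj Hnm]] := E2_MM H Hb; have [F' M'] := R_MM H1.
  have [Hi _ _ _] := H.
  apply: T_eq => [i Hi'|i].
    rewrite F' // (@resf_ext n _ (ext2 n (fnat x.1) (lastfix (fnat x.1) n)) i) ?F //; last lia.
    by apply: res_ext2.
  rewrite M' M; have [Hin|Hin] := ltnP i n.
    rewrite F; last lia. rewrite /ext2; have -> : (i == n) = false by apply/eqP; lia.
    case: (i =P lastfix (fnat x.1) n) => [->|ne]; first by rewrite eqxx andbF; case: (mnat _ _) Hnm.
    rewrite andbF orbF; case: (boolP (mnat x.2 i)) => //= _.
    have [B _] := Hi i Hin; by rewrite neq_ltn B.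
  have -> : mnat x.2 i = false by apply/negP => /mnat_out; lia.
  have -> : (i == lastfix (fnat x.1) n) = false by apply/negbTE; rewrite neq_ltn (leq_trans Hj Hin) orbT.
  by rewrite andbF.
- move=> y; rewrite inE => /and3P [/inS H /eqP E /eqP Eb].
  have [H' Hl Hm0] := MM_resB H E; have [F M] := R_MM H.
  have H2 : MM a.+1 n (fnat (R y).1) (mnat (R y).2) by apply: MM_ext H' => // i Hi; rewrite F.
  have Hb' : b -> a = 0 by move=> Hb1; apply: Hm0; rewrite Eb.
  have [_ F' M' _ _] := E2_MM H2 Hb'; have [Hi _ _ _] := H.
  have Hl' : lastfix (fnat (R y).1) n = fnat y.1 n by rewrite (lastfix_ext F).
  have [Hgn Hggn] := Hi n (ltnSn n).
  apply: T_eq => [i Hi'|i].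
    rewrite F' // Hl' (@ext2_ext n _ (resf n (fnat y.1)) _ i) //; exact: ext2_res.
  rewrite M' M Hl'; case: (i =P fnat y.1 n) => [->|ne].
    by rewrite Hggn eqxx /= andbT Eb andbF.
  rewrite andbF orbF; case: (boolP (mnat y.2 i)) => //= Hm; have := MM_supp H Hm => Hin.
  apply/eqP => E'; apply: ne; apply: (invo_inj Hi) => //; by rewrite E' Hggn.
Qed.

Lemma cardPB1 a n : #|PB a.+1 n true| = 0.
Proof.
apply/eqP; rewrite cards_eq0; apply/eqP/setP => y; rewrite !inE.
apply/negP => /and3P [/charMM H /eqP E /eqP Eb].
by have [_ _ /(_ Eb)] := MM_resB H E.
Qed.

Lemma cardS_split a n : #|S a n.+1| = #|S a n.+1 :&: A n| + #|PB a n true| + #|PB a n false|.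
Proof.
rewrite -(cardsID (A n) (S a n.+1)) -addnA; congr (_ + _).
rewrite -(cardsID [set x : T n.+1 | mnat x.2 (fnat x.1 n)] (S a n.+1 :\: A n)).
congr addn; apply: eq_card => x; rewrite !inE;
  by case: (monic_marked _ _ _); case: (mnat _ _); case: (_ != _).
Qed.

Lemma N_rec a n : #|S a n.+1| =
  (if a is a'.+1 then #|S a' n| else 0) + #|S a.+1 n| + (if a is 0 then #|S 1 n| else 0).
Proof.
rewrite cardS_split; case: a => [|a].
  by rewrite cardA0 !cardPB.
by rewrite cardA cardPB1 cardPB // addn0 addnC addn0.
Qed.

Lemma N_big a n : n < a -> #|S a n| = 0.
Proof.
move=> H; apply/eqP; rewrite cards_eq0; apply/eqP/setP => x; rewrite !inE.
apply/negbTE/negP => /charMM [_ Hn _ _]; have := nfix_le n (fnat x.1); rewrite Hn; lia.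
Qed.

Lemma N_00 : #|S 0 0| = 1.
Proof.
have -> : S 0 0 = [set ((1%g : {perm 'I_0}), (set0 : {set 'I_0}))].
  apply/setP => x; rewrite !inE; apply/idP/idP => [_|_].
    apply/eqP; apply: T_eq => // i; rewrite /mnat; case: insubP => // j; by case: j.
  apply/charMM; split => //; [by rewrite /nfix big_ord0 | by move=> i /mnat_out].
by rewrite cards1.
Qed.

Lemma N_closed n : forall a k, a + 2 * k = n -> #|S a n| = 'C(n, k).
Proof.
elim: n => [|n IH] a k H.
  have -> : a = 0 by lia. have -> : k = 0 by lia. by rewrite N_00.
rewrite N_rec; case: a H => [|a] H.
  case: k H => [|k] H; first lia.
  rewrite add0n !(IH 1 k) ?binS; try lia.
  have -> : 'C(n, k.+1) = 'C(n, k) by rewrite -(@bin_sub n k) //; [congr 'C(_, _); lia | lia].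
  by [].
rewrite addn0 (IH a k); last lia.
case: k H => [|k] H.
  by rewrite N_big ?bin0 //; lia.
rewrite (IH a.+2 k); last lia.
by rewrite binS.
Qed.

Lemma dimW (K : fieldType) t n : \dim (fullv : {vspace cellW K t n}) = #|[set x | monic_marked (absz t) n x]|.
Proof. by rewrite dimvf /dim /= muln1 card_sig cardsE. Qed.

Theorem proposition5p5 (K : fieldType) (t : int) (k : nat) :
  \dim (fullv : {vspace cellW K t (absz t + 2 * k)%N}) = 'C(absz t + 2 * k, k).
Proof.
rewrite dimW; exact: (N_closed (n := absz t + 2 * k)).
Qed.
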